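(* Let $G$ be a connected graph and $k \ge 1$ an integer. For all $\Pi_1, \Pi_2 \in \mathrm{Part}(G,k)$ there is a sequence of at most $6(k-1)$ recombination moves (each intermediate partition lying in $\mathrm{Part}(G,k)$) that transforms $\Pi_1$ into $\Pi_2$. In particular, the configuration space $\mathcal{R}_\infty(G,k)$ is connected.
   Context: For a graph $G$ and positive integer $k$, a connected $k$-partition of $G$ is a partition of $V(G)$ into $k$ disjoint nonempty sets (districts) each inducing a connected subgraph; $\mathrm{Part}(G,k)$ is the set of these. Two distinct connected $k$-partitions $\{V_1,\dots,V_k\}$ and $\{W_1,\dots,W_k\}$ are related by a recombination move if there are indices $i,j$ and a permutation $\pi$ of $\{1,\dots,k\}$ with $V_i \cup V_j = W_{\pi(i)} \cup W_{\pi(j)}$ and $V_\ell = W_{\pi(\ell)}$ for all $\ell \notin \{i,j\}$. $\mathcal{R}_\infty(G,k)$ is the graph on $\mathrm{Part}(G,k)$ whose edges are the recombination moves. *)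

(* Defs.v *)
(* A finite simple graph is T : finType with a symmetric,
   irreflexive adjacency relation e : rel T. *)
From mathcomp Require Import all_boot.
Set Implicit Arguments. Unset Strict Implicit. Unset Printing Implicit Defensive.

Section Graphs.
Variables (T : finType) (e : rel T).

Definition induced_rel (A : {set T}) : rel T :=
  [rel u v | [&& u \in A, v \in A & e u v]].

Definition connected_set (A : {set T}) : Prop :=
  A != set0 /\ forall x y, x \in A -> y \in A -> connect (induced_rel A) x y.

Definition connected_graph : Prop := connected_set [set: T].

Definition conn_partition (k : nat) (P : {set {set T}}) : Prop :=
  [/\ partition P [set: T], #|P| = k & forall A, A \in P -> connected_set A].

Definition recomb (P Q : {set {set T}}) : Prop :=
  P != Q /\
  exists A B C D, [/\ [&& A \in P, B \in P & A != B], [&& C \in Q, D \in Q & C != D],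
    A :|: B = C :|: D & P :\ A :\ B = Q :\ C :\ D].

Definition Rinf_edge (k : nat) (P Q : {set {set T}}) : Prop :=
  [/\ conn_partition k P, conn_partition k Q & recomb P Q].

(* a walk P = s_0, s_1, ..., s_n = Q in R_infty(G,k) of length n = size s
   (s lists s_1..s_n) *)
Fixpoint Rinf_walk (k : nat) (P : {set {set T}}) (s : seq {set {set T}}) : Prop :=
  match s with
  | [::] => True
  | Q :: s' => Rinf_edge k P Q /\ Rinf_walk k Q s'
  end.

Inductive Rinf_conn (k : nat) : {set {set T}} -> {set {set T}} -> Prop :=
  | Rinf_refl P : Rinf_conn k P P
  | Rinf_step P Q R : Rinf_edge k P Q -> Rinf_conn k Q R -> Rinf_conn k P R.

End Graphs.

(* Main.v *)
Require Import Defs.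
From mathcomp Require Import all_boot.
Set Implicit Arguments. Unset Strict Implicit. Unset Printing Implicit Defensive.


Section Conn.
Variables (T : finType) (e : rel T).
Hypothesis sym_e : symmetric e.
Implicit Types (S X Y : {set T}) (x y z a b v w : T).

Notation cr S := (connect (induced_rel e S)).

Lemma ir_sym S : symmetric (induced_rel e S).
Proof. move=> x y /=. rewrite /induced_rel /=. rewrite (sym_e x y) andbCA. by []. Qed.

Lemma irE S a b : induced_rel e S a b = [&& a \in S, b \in S & e a b].
Proof. by []. Qed.

Lemma cr_sym S x y : cr S x y = cr S y x.
Proof. exact: (sym_connect_sym (ir_sym S)). Qed.

Lemma cr_mem S x y : x \in S -> cr S x y -> y \in S.
Proof.
move=> xS /connectP[p pp ->]; elim: p x xS pp => //= b p IH x xS /andP[/and3P[_ bS _]].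
exact: IH.
Qed.

Lemma cr_mono S S' x y : S \subset S' -> cr S x y -> cr S' x y.
Proof.
move=> /subsetP sub; apply: connect_sub => a b /and3P[aS bS eab].
by apply: connect1; rewrite irE eab !sub.
Qed.

Lemma cr1 S x y : x \in S -> y \in S -> e x y -> cr S x y.
Proof. by move=> xS yS exy; apply: connect1; rewrite irE xS yS. Qed.

Lemma boundary S (X : {set T}) x y : x \in X -> y \notin X -> cr S x y ->
  exists a b, [/\ a \in X, b \notin X, a \in S, b \in S & e a b].
Proof.
move=> xX yX /connectP[p pp yl]; elim: p x xX pp yl => [|b p IH] x xX /=.
  by move=> _ yx; rewrite yx xX in yX.
case/andP=> /and3P[xS bS exb] pp yl.
case: (boolP (b \in X)) => bX; first exact: (IH b).
by exists x, b.
Qed.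

Definition ccomp (S : {set T}) z := [set y in S | cr S z y].
Definition ccomps (S : {set T}) := [set ccomp S z | z in S].

Lemma comp_sub S z : ccomp S z \subset S.
Proof. by apply/subsetP=> y; rewrite inE => /andP[]. Qed.

Lemma comp_self S z : z \in S -> z \in ccomp S z.
Proof. by move=> zS; rewrite inE zS connect0. Qed.

Lemma comp_clos S z a b : a \in ccomp S z -> b \in S -> e a b -> b \in ccomp S z.
Proof.
rewrite !inE => /andP[aS za] bS eab; rewrite bS /=.
exact: connect_trans za (cr1 aS bS eab).
Qed.

Lemma comp_eq S z y : y \in ccomp S z -> ccomp S y = ccomp S z.
Proof.
rewrite inE => /andP[yS zy]; apply/setP=> w; rewrite !inE.
case: (boolP (w \in S)) => //= wS; apply/idP/idP => h.
  exact: connect_trans zy h.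
by apply: connect_trans h; rewrite cr_sym.
Qed.

Lemma comp_memz S z y : y \in ccomp S z -> z \in S.
Proof. by rewrite inE => /andP[yS]; rewrite cr_sym; apply: cr_mem. Qed.

Lemma comp_inner S z y : y \in ccomp S z -> cr (ccomp S z) z y.
Proof.
move=> yc; have zS := comp_memz yc.
move: yc; rewrite inE => /andP[yS /connectP[p0 pp0 ->]].
have H : forall p a, a \in ccomp S z -> path (induced_rel e S) a p ->
    cr (ccomp S z) a (last a p).
  elim=> [|b p IH] a ac /=; first by move=> _; exact: connect0.
  case/andP=> eab pp.
  move: (eab); rewrite irE => /and3P[aS bS ab].
  have bc : b \in ccomp S z by exact: comp_clos ac bS ab.
  apply: connect_trans (IH b bc pp).
  by apply: connect1; rewrite irE ac bc ab.
by apply: H => //; exact: comp_self.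
Qed.

Lemma comps_eq S D1 D2 y : D1 \in ccomps S -> D2 \in ccomps S -> y \in D1 -> y \in D2 -> D1 = D2.
Proof.
move=> /imsetP[z1 _ ->] /imsetP[z2 _ ->] h1 h2.
by rewrite -(comp_eq h1) -(comp_eq h2).
Qed.

Lemma comp_in_comps S z : z \in S -> ccomp S z \in ccomps S.
Proof. by move=> zS; apply: imset_f. Qed.

Lemma conn_comp S z : z \in S -> connected_set e (ccomp S z).
Proof.
move=> zS; split; first by apply/set0Pn; exists z; exact: comp_self.
move=> x y xc yc; apply: connect_trans (comp_inner yc).
by rewrite -(comp_eq xc) cr_sym (comp_eq xc) comp_inner // -(comp_eq xc) comp_self // (subsetP (comp_sub S z)).
Qed.

End Conn.


Section Conn2.
Variables (T : finType) (e : rel T).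
Hypothesis sym_e : symmetric e.
Implicit Types (S X Y A B : {set T}) (x y z a b v w : T).
Notation cr S := (connect (induced_rel e S)).

Lemma conn_cr A x y : connected_set e A -> x \in A -> y \in A -> cr A x y.
Proof. by case=> _ H; apply: H. Qed.

Lemma compN A v y : connected_set e A -> v \in A -> y \in A :\ v ->
  exists2 a, a \in ccomp e (A :\ v) y & e a v.
Proof.
move=> cA vA yA.
have yc : y \in ccomp e (A :\ v) y by exact: comp_self.
have vn : v \notin ccomp e (A :\ v) y.
  by apply/negP => /(subsetP (comp_sub _ _ _)); rewrite !inE eqxx.
have yA' : y \in A by move: yA; rewrite !inE => /andP[].
have [a [b [ac bn aA bA eab]]] := boundary yc vn (conn_cr cA yA' vA).
exists a => //; case: (eqVneq b v) => [<- //|bv].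
by rewrite (comp_clos ac _ eab) ?inE ?bv in bn.
Qed.

Lemma sub_comp S X z : X \subset S -> z \in X -> (forall y, y \in X -> cr X z y) ->
  X \subset ccomp e S z.
Proof.
move=> XS zX H; apply/subsetP => y yX; rewrite inE (subsetP XS) //=.
exact: cr_mono XS (H y yX).
Qed.

Lemma conn_union X Y a b : connected_set e X -> connected_set e Y ->
  a \in X -> b \in Y -> e a b -> connected_set e (X :|: Y).
Proof.
move=> [_ cX] [_ cY] aX bY eab; split.
  by apply/set0Pn; exists a; rewrite inE aX.
have sX : X \subset X :|: Y by exact: subsetUl.
have sY : Y \subset X :|: Y by exact: subsetUr.
have ab : cr (X :|: Y) a b by apply: cr1; rewrite ?inE ?aX ?bY ?orbT.
have H : forall x, x \in X :|: Y -> cr (X :|: Y) a x.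
  move=> x; rewrite inE => /orP[xX|xY].
    exact: cr_mono sX (cX a x aX xX).
  exact: connect_trans ab (cr_mono sY (cY b x bY xY)).
move=> x y xU yU; apply: connect_trans (H y yU).
by rewrite cr_sym //; apply: H.
Qed.

Lemma conn_union2 X Y c : connected_set e X -> connected_set e Y ->
  c \in X -> c \in Y -> connected_set e (X :|: Y).
Proof.
move=> [_ cX] [_ cY] cX' cY'; split.
  by apply/set0Pn; exists c; rewrite inE cX'.
have sX : X \subset X :|: Y by exact: subsetUl.
have sY : Y \subset X :|: Y by exact: subsetUr.
have H : forall x, x \in X :|: Y -> cr (X :|: Y) c x.
  move=> x; rewrite inE => /orP[xX|xY].
    exact: cr_mono sX (cX c x cX' xX).
  exact: cr_mono sY (cY c x cY' xY).
move=> x y xU yU; apply: connect_trans (H y yU).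
by rewrite cr_sym //; apply: H.
Qed.

Lemma conn1 v : connected_set e [set v].
Proof.
split; first by apply/set0Pn; exists v; rewrite inE.
by move=> x y; rewrite !inE => /eqP-> /eqP->; exact: connect0.
Qed.

End Conn2.


Section Part.
Variables (T : finType) (e : rel T).
Implicit Types (U S X Y A B C D : {set T}) (x y z v : T) (P Q : {set {set T}}).

Lemma disjI X Y : (forall x, x \in X -> x \in Y -> False) -> [disjoint X & Y].
Proof. by move=> H; apply/pred0P => x /=; apply/negP => /andP[/H h /h]. Qed.

Lemma triv_eq P A B x : trivIset P -> A \in P -> B \in P -> x \in A -> x \in B -> A = B.
Proof.
move=> /trivIsetP tP AP BP xA xB; apply/eqP; apply/negPn/negP => nAB.
by have := disjointFr (tP _ _ AP BP nAB) xA; rewrite xB.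
Qed.

Lemma coverP P x : reflect (exists2 A, A \in P & x \in A) (x \in cover P).
Proof. exact: bigcupP. Qed.

Definition cp U k P := [/\ partition P U, #|P| = k & forall A, A \in P -> connected_set e A].
Definition edgeU U k P Q := [/\ cp U k P, cp U k Q & recomb P Q].

Lemma cp_cover U k P : cp U k P -> cover P = U.
Proof. by case=> /and3P[/eqP]. Qed.
Lemma cp_triv U k P : cp U k P -> trivIset P.
Proof. by case=> /and3P[]. Qed.
Lemma cp_set0 U k P : cp U k P -> set0 \notin P.
Proof. by case=> /and3P[]. Qed.
Lemma cp_card U k P : cp U k P -> #|P| = k.
Proof. by case. Qed.
Lemma cp_conn U k P A : cp U k P -> A \in P -> connected_set e A.
Proof. by case=> _ _; apply. Qed.
Lemma cp_sub U k P A : cp U k P -> A \in P -> A \subset U.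
Proof.
move=> cP AP; rewrite -(cp_cover cP); apply/subsetP => x xA.
by apply/coverP; exists A.
Qed.
Lemma cp_ne U k P A : cp U k P -> A \in P -> A != set0.
Proof. by move=> cP AP; apply/eqP => A0; move: (cp_set0 cP); rewrite -A0 AP. Qed.

Lemma move U k P A B C D :
  cp U k P -> A \in P -> B \in P -> A != B ->
  C :|: D = A :|: B -> [disjoint C & D] -> C != set0 -> D != set0 ->
  connected_set e C -> connected_set e D -> C != A -> C != B ->
  edgeU U k P ((P :\ A :\ B) :|: [set C; D]).
Proof.
move=> cP AP BP nAB eCD dCD C0 D0 cC cD nCA nCB.
set R := P :\ A :\ B; set Q := R :|: [set C; D].
have tP := cp_triv cP.
have Rdis : forall X x, X \in R -> x \in X -> x \in A :|: B -> False.
  move=> X x; rewrite !inE => /and3P[nXB nXA XP] xX /orP[xA|xB].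
    by move: nXA; rewrite (triv_eq tP XP AP xX xA) eqxx.
  by move: nXB; rewrite (triv_eq tP XP BP xX xB) eqxx.
have subC : C \subset A :|: B by rewrite -eCD subsetUl.
have subD : D \subset A :|: B by rewrite -eCD subsetUr.
have CnR : C \notin R.
  apply/negP => CR; case/set0Pn: C0 => x xC.
  exact: (Rdis C x CR xC (subsetP subC x xC)).
have DnR : D \notin R.
  apply/negP => DR; case/set0Pn: D0 => x xD.
  exact: (Rdis D x DR xD (subsetP subD x xD)).
have nCD : C != D.
  apply/negP => /eqP CD; case/set0Pn: C0 => x xC.
  by have := disjointFr dCD xC; rewrite -CD xC.
have CnP : C \notin P.
  apply/negP => CP; case/set0Pn: C0 => x xC.
  have := subsetP subC x xC; rewrite inE => /orP[xA|xB].
    by move: nCA; rewrite (triv_eq tP CP AP xC xA) eqxx.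
  by move: nCB; rewrite (triv_eq tP CP BP xC xB) eqxx.
have RP : R \subset P by apply/subsetP => X; rewrite !inE => /and3P[_ _].
have cardR : #|R| + 2 = k.
  rewrite -(cp_card cP) (cardsD1 A P) AP (cardsD1 B (P :\ A)) !inE BP eq_sym nAB.
  by rewrite /R addnC.
have memQ : forall X, (X \in Q) = [|| X \in R, X == C | X == D].
  by move=> X; rewrite /Q in_setU in_set2.
have cQ : cp U k Q.
  split.
  - apply/and3P; split.
    + apply/eqP/setP => x; rewrite -(cp_cover cP).
      apply/coverP/coverP.
        case=> X; rewrite memQ => /orP[XR|/orP[/eqP->|/eqP->]] xX.
        * by exists X => //; apply: (subsetP RP).
        * have := subsetP subC x xX; rewrite inE => /orP[xA|xB]; [by exists A|by exists B].
        * have := subsetP subD x xX; rewrite inE => /orP[xA|xB]; [by exists A|by exists B].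
      case=> X XP xX.
      case: (boolP (X \in R)) => XR; first by exists X => //; rewrite memQ XR.
      have xAB : x \in A :|: B.
        move: XR; rewrite !inE XP andbT negb_and !negbK => /orP[/eqP XB|/eqP XA].
          by rewrite -XB xX orbT.
        by rewrite -XA xX.
      rewrite -eCD inE in xAB; case/orP: xAB => [xC|xD].
        by exists C => //; rewrite memQ eqxx orbT.
      by exists D => //; rewrite memQ eqxx !orbT.
    + apply/trivIsetP => X Y.
      have tR : trivIset R by apply: trivIsetS tP.
      have dRC : forall X, X \in R -> [disjoint X & C].
        move=> X' XR; apply: disjI => x xX xC.
        exact: (Rdis X' x XR xX (subsetP subC x xC)).
      have dRD : forall X, X \in R -> [disjoint X & D].
        move=> X' XR; apply: disjI => x xX xD.
        exact: (Rdis X' x XR xX (subsetP subD x xD)).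
      rewrite !memQ => /orP[XR|/orP[/eqP->|/eqP->]] /orP[YR|/orP[/eqP->|/eqP->]] nXY.
      * by move/trivIsetP: tR; apply.
      * exact: dRC.
      * exact: dRD.
      * by rewrite disjoint_sym; apply: dRC.
      * by rewrite eqxx in nXY.
      * exact: dCD.
      * by rewrite disjoint_sym; apply: dRD.
      * by rewrite disjoint_sym.
      * by rewrite eqxx in nXY.
    + rewrite memQ !negb_or; apply/and3P; split.
      * by apply/negP => /(subsetP RP); apply/negP; exact: cp_set0 cP.
      * by rewrite eq_sym.
      * by rewrite eq_sym.
  - have -> : Q = C |: (D |: R).
      apply/setP => X; rewrite memQ !in_setU1.
      by case: (X \in R); case: (X == C); case: (X == D).
    rewrite cardsU1 cardsU1 in_setU1 negb_or nCD CnR DnR /=.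
    by rewrite -cardR addnC add1n addn1 addn2.
  - move=> X; rewrite memQ => /orP[XR|/orP[/eqP->|/eqP->]] //.
    exact: cp_conn cP (subsetP RP X XR).
split => //.
split.
  by apply/eqP => PQ; move: CnP; rewrite PQ /Q !inE eqxx orbT.
exists A, B, C, D; split.
- by rewrite AP BP nAB.
- by rewrite /Q !inE !eqxx !orbT nCD.
- by rewrite eCD.
- apply/setP => X; rewrite [in RHS]in_setD1 [in RHS]in_setD1 memQ.
  rewrite -/R; case: (eqVneq X D) => [->|XD] /=; first by apply/negbTE.
  case: (eqVneq X C) => [->|XC] /=; first by apply/negbTE.
  by rewrite orbF.
Qed.

End Part.


Section Walks.
Variables (T : finType) (e : rel T).
Implicit Types (U S X Y A B C D : {set T}) (x y z v : T) (P Q R : {set {set T}}).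

Fixpoint walkU U k P (s : seq {set {set T}}) : Prop :=
  match s with
  | [::] => True
  | Q :: s' => edgeU e U k P Q /\ walkU U k Q s'
  end.

Definition reach U k P Q n := exists s, [/\ walkU U k P s, last P s = Q & size s <= n].

Lemma reach_refl U k P : reach U k P P 0.
Proof. by exists [::]. Qed.

Lemma reach_mono U k P Q n m : n <= m -> reach U k P Q n -> reach U k P Q m.
Proof. by move=> nm [s [w l sz]]; exists s; split => //; apply: leq_trans nm. Qed.

Lemma walk_cat U k P s1 s2 : walkU U k P s1 -> walkU U k (last P s1) s2 -> walkU U k P (s1 ++ s2).
Proof. by elim: s1 P => //= Q s1 IH P [h1 h2] h3; split => //; apply: IH. Qed.

Lemma reach_cat U k P Q R n m : reach U k P Q n -> reach U k Q R m -> reach U k P R (n + m).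
Proof.
move=> [s1 [w1 l1 z1]] [s2 [w2 l2 z2]]; exists (s1 ++ s2); split.
- by apply: walk_cat => //; rewrite l1.
- by rewrite last_cat l1.
- by rewrite size_cat leq_add.
Qed.

Lemma reach_edge U k P Q : edgeU e U k P Q -> reach U k P Q 1.
Proof. by move=> h; exists [:: Q]. Qed.

Lemma recomb_sym P Q : recomb P Q -> recomb Q P.
Proof.
case=> nPQ [A [B [C [D [h1 h2 h3 h4]]]]]; split; first by rewrite eq_sym.
by exists C, D, A, B; split.
Qed.

Lemma edge_sym U k P Q : edgeU e U k P Q -> edgeU e U k Q P.
Proof. by case=> h1 h2 h3; split => //; apply: recomb_sym. Qed.

Lemma reach_sym U k P Q n : reach U k P Q n -> reach U k Q P n.
Proof.
case=> s [w <- sz]; apply: (reach_mono sz).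
elim: s P w {sz} => [|R s IH] P /=; first by move=> _; exact: reach_refl.
case=> ePR w; rewrite -addn1; apply: reach_cat (IH R w) _.
by apply: reach_edge; apply: edge_sym.
Qed.

Lemma cp_lift U k P v : v \in U -> cp e (U :\ v) k P -> cp e U k.+1 ([set v] |: P).
Proof.
move=> vU cP.
have sub : forall A, A \in P -> A \subset U :\ v by move=> A; apply: cp_sub cP.
have vnP : [set v] \notin P.
  apply/negP => /sub /subsetP /(_ v); rewrite !inE eqxx; by move=> /(_ isT).
split.
- apply/and3P; split.
  + apply/eqP/setP => x; apply/coverP/idP.
      case=> A; rewrite in_setU1 => /orP[/eqP->|AP]; first by rewrite inE => /eqP->.
      by move=> /(subsetP (sub A AP)); rewrite inE => /andP[].
    move=> xU; case: (eqVneq x v) => [->|xv].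
      by exists [set v]; rewrite ?inE ?eqxx.
    have : x \in cover P by rewrite (cp_cover cP) in_setD1 xv xU.
    by case/coverP => A AP xA; exists A => //; rewrite in_setU1 AP orbT.
  + apply/trivIsetP => A B; rewrite !in_setU1.
    have dv : forall A, A \in P -> [disjoint [set v] & A].
      move=> A' AP; apply: disjI => x; rewrite inE => /eqP-> /(subsetP (sub A' AP)).
      by rewrite !inE eqxx.
    case/orP=> [/eqP->|AP] /orP[/eqP->|BP] nAB.
    * by rewrite eqxx in nAB.
    * exact: dv.
    * by rewrite disjoint_sym; apply: dv.
    * by move/trivIsetP: (cp_triv cP); apply.
  + rewrite in_setU1 negb_or (cp_set0 cP) andbT.
    by apply/negP => /eqP/setP/(_ v); rewrite !inE eqxx.
- by rewrite cardsU1 vnP (cp_card cP).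
- move=> A; rewrite in_setU1 => /orP[/eqP->|AP]; first exact: conn1.
  exact: cp_conn cP AP.
Qed.

Lemma notin_sub U k P v : cp e (U :\ v) k P -> [set v] \notin P.
Proof.
move=> cP; apply/negP => /(cp_sub cP) /subsetP /(_ v).
by rewrite !inE eqxx => /(_ isT).
Qed.

Lemma recomb_lift v P Q : [set v] \notin P -> [set v] \notin Q -> recomb P Q ->
  recomb ([set v] |: P) ([set v] |: Q).
Proof.
move=> vP vQ [nPQ [A [B [C [D [/and3P[AP BP nAB] /and3P[CQ DQ nCD] eU eR]]]]]].
have nvA : A != [set v] by apply/eqP => Av; move: vP; rewrite -Av AP.
have nvB : B != [set v] by apply/eqP => Av; move: vP; rewrite -Av BP.
have nvC : C != [set v] by apply/eqP => Av; move: vQ; rewrite -Av CQ.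
have nvD : D != [set v] by apply/eqP => Av; move: vQ; rewrite -Av DQ.
split.
  apply/negP => /eqP h; move/negP: nPQ; apply; apply/eqP.
  by rewrite -(setU1K vP) h setU1K.
exists A, B, C, D; split.
- by rewrite !in_setU1 AP BP !orbT nAB.
- by rewrite !in_setU1 CQ DQ !orbT nCD.
- exact: eU.
- apply/setP => X; move/setP: eR => /(_ X); rewrite !in_setD1 !in_setU1.
  case: (eqVneq X [set v]) => [->|_]; last by move=> ->.
  by rewrite eq_sym nvB eq_sym nvA eq_sym nvD eq_sym nvC.
Qed.

Lemma edge_lift U k v P Q : v \in U -> edgeU e (U :\ v) k P Q ->
  edgeU e U k.+1 ([set v] |: P) ([set v] |: Q).
Proof.
move=> vU [cP cQ r]; split.
- exact: cp_lift.
- exact: cp_lift.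
by apply: recomb_lift => //; [apply: notin_sub cP|apply: notin_sub cQ].
Qed.

Lemma reach_lift U k v P Q n : v \in U -> reach (U :\ v) k P Q n ->
  reach U k.+1 ([set v] |: P) ([set v] |: Q) n.
Proof.
move=> vU [s [w <- sz]]; exists (map (fun R => [set v] |: R) s); split.
- elim: s P w {sz} => //= R s IH P [eR w]; split; last exact: IH.
  exact: edge_lift.
- by rewrite (last_map (fun R => [set v] |: R)).
- by rewrite size_map.
Qed.

Lemma cp_restr U k P v : cp e U k.+1 P -> [set v] \in P -> cp e (U :\ v) k (P :\ [set v]).
Proof.
move=> cP vP; have tP := cp_triv cP.
split.
- apply/and3P; split.
  + apply/eqP/setP => x; rewrite -(cp_cover cP) in_setD1; apply/coverP/idP.
      case=> A; rewrite in_setD1 => /andP[Av AP] xA.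
      rewrite andbC; apply/andP; split; first by apply/coverP; exists A.
      apply/negP => /eqP xv; move: Av; rewrite (triv_eq tP AP vP xA) ?eqxx //.
      by rewrite xv inE.
    case/andP=> xv /coverP[A AP xA]; exists A => //.
    rewrite in_setD1 AP andbT; apply/negP => /eqP Av.
    by move: xA xv; rewrite Av inE => ->.
  + by apply: trivIsetS tP; apply/subsetP => X; rewrite in_setD1 => /andP[].
  + by rewrite in_setD1 negb_and (cp_set0 cP) orbT.
- by move: (cp_card cP); rewrite (cardsD1 [set v] P) vP add1n => -[].
- by move=> A; rewrite in_setD1 => /andP[_]; apply: cp_conn cP.
Qed.

End Walks.


Section Iso.
Variables (T : finType) (e : rel T).
Hypothesis sym_e : symmetric e.
Implicit Types (U S X Y A B C D : {set T}) (x y z v w : T) (P Q R : {set {set T}}).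
Notation cr S := (connect (induced_rel e S)).

Lemma memcomp S y x : (x \in ccomp e S y) = (x \in S) && cr S y x.
Proof. by rewrite inE. Qed.

Lemma comp_avoid S D y : D \in ccomps e S -> y \in S -> y \notin D ->
  ccomp e S y \subset S :\: D.
Proof.
move=> DS yS yD; apply/subsetP => x xY; rewrite inE (subsetP (comp_sub _ _ _) x xY) andbT.
apply/negP => xD.
have Yc : ccomp e S y \in ccomps e S by exact: comp_in_comps.
have := comps_eq sym_e Yc DS xY xD => YD.
by move: yD; rewrite -YD comp_self.
Qed.

Lemma conn_minus A v D : connected_set e A -> v \in A -> D \in ccomps e (A :\ v) ->
  connected_set e (A :\: D).
Proof.
move=> cA vA DS.
have DA : D \subset A :\ v by case/imsetP: DS => z _ ->; exact: comp_sub.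
have vC : v \in A :\: D.
  rewrite inE vA andbT; apply/negP => /(subsetP DA); by rewrite !inE eqxx.
have H : forall x, x \in A :\: D -> cr (A :\: D) v x.
  move=> x; case: (eqVneq x v) => [-> _|xv]; first exact: connect0.
  rewrite inE => /andP[xD xA].
  have xAv : x \in A :\ v by rewrite !inE xv.
  have Ysub := comp_avoid DS xAv xD.
  have YC : ccomp e (A :\ v) x \subset A :\: D.
    apply: subset_trans Ysub _; apply/subsetP => y; rewrite !inE => /andP[-> /andP[_ ->]].
    by [].
  have [a aY eav] := compN cA vA xAv.
  have aC : a \in A :\: D by exact: (subsetP YC).
  apply: connect_trans (_ : cr (A :\: D) v a) _.
    by apply: cr1 => //; rewrite sym_e.
  rewrite cr_sym //; apply: cr_mono YC _.
  by apply: (comp_inner sym_e).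
split; first by apply/set0Pn; exists v.
move=> x y xC yC; apply: connect_trans (H y yC).
by rewrite cr_sym //; apply: H.
Qed.

Lemma comps_shrink A v D : D \in ccomps e (A :\ v) ->
  #|ccomps e ((A :\: D) :\ v)| < #|ccomps e (A :\ v)|.
Proof.
move=> DS.
have sub : ccomps e ((A :\: D) :\ v) \subset ccomps e (A :\ v) :\ D.
  apply/subsetP => Y /imsetP[y yC ->].
  have yAv : y \in A :\ v by move: yC; rewrite !inE => /andP[-> /andP[_ ->]].
  have yD : y \notin D by move: yC; rewrite !inE => /andP[_ /andP[]].
  have eqY : ccomp e ((A :\: D) :\ v) y = ccomp e (A :\ v) y.
    apply/eqP; rewrite eqEsubset; apply/andP; split.
      apply/subsetP => x; rewrite !memcomp => /andP[xC cx].
      have -> : x \in A :\ v by move: xC; rewrite !inE => /andP[-> /andP[_ ->]].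
      by apply: cr_mono cx; apply/subsetP => t; rewrite !inE => /andP[-> /andP[_ ->]].
    apply: sub_comp; last first.
    - by move=> t tY; apply: (comp_inner sym_e).
    - exact: comp_self.
    apply: subset_trans (comp_avoid DS yAv yD) _.
    by apply/subsetP => t; rewrite !inE => /andP[-> /andP[-> ->]].
  rewrite eqY in_setD1 comp_in_comps // andbT.
  by apply/negP => /eqP YD; move: yD; rewrite -YD comp_self.
apply: leq_ltn_trans (subset_leq_card sub) _.
by rewrite (cardsD1 D (ccomps e (A :\ v))) DS add1n.
Qed.

End Iso.


Section Iso2.
Variables (T : finType) (e : rel T).
Hypothesis sym_e : symmetric e.
Implicit Types (U S X Y A B C D : {set T}) (x y z v w : T) (P Q R : {set {set T}}).
Notation cr S := (connect (induced_rel e S)).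

Lemma iso U k v : v \in U -> connected_set e (U :\ v) ->
  forall n P, cp e U k.+2 P ->
  (forall A, A \in P -> v \in A -> #|ccomps e (A :\ v)| <= n) ->
  exists P1, [/\ cp e U k.+2 P1, [set v] \in P1 & reach e U k.+2 P P1 n].
Proof.
move=> vU cUv; elim=> [|n IH] P cP hP.
all: have tP := cp_triv cP.
all: have vc : v \in cover P by rewrite (cp_cover cP).
all: set A := pblock P v; have AP : A \in P by exact: pblock_mem.
all: have vA : v \in A by rewrite mem_pblock.
all: have cA := cp_conn cP AP.
- exists P; split => //; last exact: reach_refl.
  have : #|ccomps e (A :\ v)| == 0 by rewrite -leqn0 hP.
  rewrite cards_eq0 => /eqP h.
  have -> : [set v] = A => //.
  apply/setP => x; rewrite inE; apply/eqP/idP => [->//|xA].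
  apply/eqP; apply/negPn/negP => xv.
  have : ccomp e (A :\ v) x \in ccomps e (A :\ v) by apply: comp_in_comps; rewrite !inE xv.
  by rewrite h inE.
case: (eqVneq (A :\ v) set0) => [A0|/set0Pn[z zA]].
  exists P; split => //; last exact: (reach_mono (leq0n _) (reach_refl _ _ _ _)).
  have -> : [set v] = A => //.
  apply/setP => x; rewrite inE; apply/eqP/idP => [->//|xA].
  apply/eqP; apply/negPn/negP => xv.
  by move/setP: A0 => /(_ x); rewrite !inE xv xA.
set Dc := ccomp e (A :\ v) z.
have DS : Dc \in ccomps e (A :\ v) by exact: comp_in_comps.
have DAv : Dc \subset A :\ v by exact: comp_sub.
have DA : Dc \subset A by apply: subset_trans DAv _; apply/subsetP => t; rewrite inE => /andP[].
have zD : z \in Dc by exact: comp_self.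
have [B BP nBA] : exists2 B, B \in P & B != A.
  have : 1 < #|P| by rewrite (cp_card cP).
  rewrite (cardsD1 A P) AP add1n ltnS card_gt0 => /set0Pn[B]; rewrite in_setD1 => /andP[nBA BP].
  by exists B.
have [b bB] : exists b, b \in B by apply/set0Pn; exact: cp_ne cP BP.
have bA : b \notin A by apply/negP => bA; move: nBA; rewrite (triv_eq tP BP AP bB bA) eqxx.
have bU : b \in U by apply: (subsetP (cp_sub cP BP)).
have bv : b != v by apply/negP => /eqP bv; move: bA; rewrite bv vA.
have zU : z \in U :\ v.
  move: zA; rewrite !inE => /andP[-> zA'] /=; exact: (subsetP (cp_sub cP AP)).
have bD : b \notin Dc by apply/negP => /(subsetP DA); rewrite (negbTE bA).
have bUv : b \in U :\ v by rewrite in_setD1 bv bU.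
have [a [w [aD wD aU wU eaw]]] := boundary zD bD (conn_cr cUv zU bUv).
have wA : w \notin A.
  apply/negP => wA; move: wD; rewrite (comp_clos aD _ eaw) //.
  by move: wU; rewrite !inE => /andP[-> _].
have wc : w \in cover P by rewrite (cp_cover cP); move: wU; rewrite inE => /andP[].
set A' := pblock P w; have A'P : A' \in P by exact: pblock_mem.
have wA' : w \in A' by rewrite mem_pblock.
have nAA' : A != A' by apply/negP => /eqP AA'; move: wA; rewrite AA' wA'.
have vA' : v \notin A'.
  by apply/negP => vA'; move: nAA'; rewrite (triv_eq tP AP A'P vA vA') eqxx.
set C := A :\: Dc; set D' := Dc :|: A'.
have vC : v \in C by rewrite in_setD vA andbT; apply/negP => /(subsetP DAv); rewrite !inE eqxx.
have eU : C :|: D' = A :|: A'.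
  apply/setP => t; rewrite !in_setU in_setD.
  case: (boolP (t \in Dc)) => tD /=; last by [].
  by rewrite (subsetP DA t tD).
have dCD : [disjoint C & D'].
  apply: disjI => t; rewrite in_setU in_setD => /andP[tD tA] /orP[tD'|tA']; first by rewrite tD' in tD.
  by move: nAA'; rewrite (triv_eq tP AP A'P tA tA') eqxx.
have cC : connected_set e C.
  by have := conn_minus sym_e cA vA DS.
have cD' : connected_set e D'.
  apply: (conn_union sym_e (conn_comp sym_e _) (cp_conn cP A'P) aD wA' eaw).
  by move: zA; rewrite inE.
have ed := move cP AP A'P nAA' eU dCD (_ : C != set0) (_ : D' != set0) cC cD'
  (_ : C != A) (_ : C != A').
have C0 : C != set0 by apply/set0Pn; exists v.
have D0 : D' != set0 by apply/set0Pn; exists w; rewrite in_setU wA' orbT.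
have CA : C != A.
  apply/negP => /eqP CA; have zA' : z \in A by move: zA; rewrite in_setD1 => /andP[].
  by move/setP: CA => /(_ z); rewrite in_setD zD zA'.
have CA' : C != A' by apply/negP => /eqP CA'; move: vC; rewrite CA' (negbTE vA').
have {}ed := ed C0 D0 CA CA'.
set P2 := (P :\ A :\ A') :|: [set C; D'] in ed.
have [_ cP2 _] := ed.
have CP2 : C \in P2 by rewrite /P2 in_setU in_set2 eqxx orbT.
have hP2 : forall A2, A2 \in P2 -> v \in A2 -> #|ccomps e (A2 :\ v)| <= n.
  move=> A2 A2P vA2; rewrite (triv_eq (cp_triv cP2) A2P CP2 vA2 vC).
  rewrite -ltnS; apply: leq_trans (hP A AP vA).
  by have := comps_shrink sym_e DS.
have [P1 [cP1 vP1 r]] := IH P2 cP2 hP2.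
exists P1; split => //; rewrite -add1n.
exact: reach_cat (reach_edge ed) r.
Qed.

End Iso2.


Section Count.
Variables (T : finType) (e : rel T).
Hypothesis sym_e : symmetric e.
Implicit Types (U S X Y A B C D W : {set T}) (x y z v w : T) (P Q R : {set {set T}}).
Notation cr S := (connect (induced_rel e S)).

Definition rootb x A := if x \in A then x else odflt x [pick y in A].

Lemma rootb_in x A : A != set0 -> rootb x A \in A.
Proof.
rewrite /rootb; case: ifP => // _ /set0Pn[y yA].
by case: pickP => [y' //|/(_ y)]; rewrite yA.
Qed.

Section Side.
Variables (U W : {set T}) (x : T) (k : nat) (P : {set {set T}}).
Hypothesis cP : cp e U k P.
Hypothesis WU : W \subset U.
Hypothesis xW : x \notin W.
Hypothesis clos : forall a b, a \in W -> b \in U -> b != x -> e a b -> b \in W.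

Definition cs v := [set D in ccomps e (pblock P v :\ v) | rootb x (pblock P v) \notin D].

Lemma blk v : v \in U -> pblock P v \in P /\ v \in pblock P v.
Proof.
move=> vU; have vc : v \in cover P by rewrite (cp_cover cP).
by split; [exact: pblock_mem | rewrite mem_pblock].
Qed.

Lemma cs_bound v : v \in U -> #|ccomps e (pblock P v :\ v)| <= #|cs v| + 1.
Proof.
move=> vU; set A := pblock P v; set r := rootb x A.
set S1 := [set D in ccomps e (A :\ v) | r \in D].
have sub : ccomps e (A :\ v) \subset cs v :|: S1.
  by apply/subsetP => D DS; rewrite !inE DS; case: (r \in D).
apply: leq_trans (subset_leq_card sub) _; apply: leq_trans (leq_card_setU _ _) _.
rewrite leq_add2l.
case: (set_0Vmem S1) => [->|[D0 D0S]]; first by rewrite cards0.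
have : S1 \subset [set D0].
  apply/subsetP => D DS; rewrite inE; apply/eqP.
  move: DS D0S; rewrite !inE => /andP[DS rD] /andP[D0S rD0].
  exact: (@comps_eq _ e sym_e (A :\ v) D D0 r DS D0S rD rD0).
by move/subset_leq_card; rewrite cards1.
Qed.

Definition gsel (p : T * {set T}) := odflt x [pick u in p.2 | e p.1 u].

Definition Sp := [set p : T * {set T} | (p.1 \in W) && (p.2 \in cs p.1)].

Lemma gsel_spec p : p \in Sp ->
  [/\ gsel p \in p.2, e p.1 (gsel p) & gsel p \in W].
Proof.
case: p => v D; rewrite inE /= => /andP[vW]; rewrite inE => /andP[DS rD].
have vU : v \in U by exact: (subsetP WU).
have [AP vA] := blk vU.
set A := pblock P v in AP vA DS rD.
have cA := cp_conn cP AP.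
have [u uD evu] : exists2 u, u \in D & e v u.
  case/imsetP: DS => y yAv ->.
  have [a aY eav] := compN cA vA yAv.
  by exists a => //; rewrite sym_e.
have hg : gsel (v, D) \in D /\ e v (gsel (v, D)).
  rewrite /gsel /=; case: pickP => [u' /andP[] //|/(_ u)].
  by rewrite uD evu.
case: hg => gD eg; split => //.
have DA : D \subset A.
  case/imsetP: DS => y _ ->; apply/subsetP => t /(subsetP (comp_sub _ _ _)).
  by rewrite in_setD1 => /andP[].
have gA : gsel (v, D) \in A by exact: (subsetP DA).
apply: (clos vW _ _ eg).
  exact: (subsetP (cp_sub cP AP)).
apply/negP => /eqP gx.
move: rD; rewrite /rootb -gx gA gD.
by [].
Qed.

Lemma gsel_inj : {in Sp &, injective gsel}.
Proof.
move=> [v1 D1] [v2 D2] h1 h2 /= eg.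
have [g1D e1 _] := gsel_spec h1.
have [g2D e2 _] := gsel_spec h2.
move: h1 h2; rewrite !inE /= => /andP[v1W /andP[D1S rD1]] /andP[v2W /andP[D2S rD2]].
move: g1D g2D e1 e2; rewrite /= eg; set u := gsel (v2, D2) => uD1 uD2 e1 e2.
have v1U : v1 \in U by exact: (subsetP WU).
have v2U : v2 \in U by exact: (subsetP WU).
have [A1P v1A1] := blk v1U; have [A2P v2A2] := blk v2U.
have DA : forall v D, D \in ccomps e (pblock P v :\ v) -> D \subset pblock P v :\ v.
  by move=> v D /imsetP[y _ ->]; exact: comp_sub.
have uA1 : u \in pblock P v1 :\ v1 by exact: (subsetP (DA _ _ D1S)).
have uA2 : u \in pblock P v2 :\ v2 by exact: (subsetP (DA _ _ D2S)).
have eA : pblock P v1 = pblock P v2.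
  have u1 : u \in pblock P v1 by move: uA1; rewrite in_setD1 => /andP[].
  have u2 : u \in pblock P v2 by move: uA2; rewrite in_setD1 => /andP[].
  exact: (triv_eq (cp_triv cP) A1P A2P u1 u2).
move: D1S rD1 uA1 v1A1 A1P; rewrite eA => D1S rD1 uA1 v1A v1P.
set A := pblock P v2 in D1S rD1 uA1 v1A D2S rD2 uA2 v2A2 A2P.
have cA := cp_conn cP A2P.
set r := rootb x A in rD1 rD2.
case: (eqVneq v1 v2) => [ev|nv].
  subst v2; congr (_, _); exact: (@comps_eq _ e sym_e (A :\ v1) D1 D2 u D1S D2S uD1 uD2).
exfalso.
have v2D1 : v2 \in D1.
  case/imsetP: (D1S) => y _ Dy; rewrite Dy; apply: (comp_clos (_ : u \in _)) => //.
    by rewrite -Dy.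
  by rewrite in_setD1 eq_sym nv v2A2.
  by rewrite sym_e.
have v1D2 : v1 \in D2.
  case/imsetP: (D2S) => y _ Dy; rewrite Dy; apply: (comp_clos (_ : u \in _)) => //.
    by rewrite -Dy.
  by rewrite in_setD1 nv v1A.
  by rewrite sym_e.
have rA : r \in A by apply: rootb_in; apply/set0Pn; exists v2.
have rv1 : r != v1 by apply/eqP => rv; move: rD2; rewrite rv v1D2.
have rv2 : r != v2 by apply/eqP => rv; move: rD1; rewrite rv v2D1.
have rAv2 : r \in A :\ v2 by rewrite in_setD1 rv2 rA.
have rAv1 : r \in A :\ v1 by rewrite in_setD1 rv1 rA.
set X := ccomp e (A :\ v2) r.
have XS : X \in ccomps e (A :\ v2) by exact: comp_in_comps.
have v1X : v1 \notin X.
  apply/negP => v1X; have XD := (@comps_eq _ e sym_e (A :\ v2) X D2 v1 XS D2S v1X v1D2).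
  by move: rD2; rewrite -XD comp_self.
have [a aX eav] := compN cA v2A2 rAv2.
have Xsub : X \subset A :\ v1.
  apply/subsetP => t tX; rewrite in_setD1.
  have := subsetP (comp_sub _ _ _) t tX; rewrite in_setD1 => /andP[_ ->].
  by rewrite andbT; apply/negP => /eqP tv; move: v1X; rewrite -tv tX.
have XR : X \subset ccomp e (A :\ v1) r.
  apply: sub_comp => //; first exact: comp_self.
  by move=> t tX; apply: (comp_inner sym_e).
have aR : a \in ccomp e (A :\ v1) r by exact: (subsetP XR).
have v2R : v2 \in ccomp e (A :\ v1) r.
  apply: comp_clos aR _ eav; by rewrite in_setD1 eq_sym nv v2A2.
have RS : ccomp e (A :\ v1) r \in ccomps e (A :\ v1) by exact: comp_in_comps.
have := (@comps_eq _ e sym_e (A :\ v1) _ D1 v2 RS D1S v2R v2D1) => RD.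
by move: rD1; rewrite -RD comp_self.
Qed.

Lemma side_count : \sum_(v in W) #|ccomps e (pblock P v :\ v)| <= 2 * #|W|.
Proof.
have E : \sum_(v in W) #|cs v| = #|Sp|.
  transitivity (\sum_(v in W) \sum_(D in cs v) 1).
    by apply: eq_bigr => v _; rewrite sum1_card.
  rewrite pair_big_dep -sum1_card; apply: eq_bigl => p; rewrite [in RHS]in_set; by [].
have Sb : #|Sp| <= #|W|.
  rewrite -(card_in_imset gsel_inj); apply: subset_leq_card.
  by apply/subsetP => u /imsetP[p pS ->]; have [_ _ ->] := gsel_spec pS.
apply: leq_trans (_ : \sum_(v in W) (#|cs v| + 1) <= _).
  by apply: leq_sum => v vW; apply: cs_bound; exact: (subsetP WU).
rewrite big_split /= E sum1_card mul2n -addnn leq_add2r.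
exact: Sb.
Qed.

End Side.
End Count.


Section Good.
Variables (T : finType) (e : rel T).
Hypothesis sym_e : symmetric e.
Implicit Types (U S X Y A B C D W : {set T}) (x y z v w : T) (P Q R : {set {set T}}).
Notation cr S := (connect (induced_rel e S)).

Lemma good_vertex U kP kQ P Q : connected_set e U -> 1 < #|U| -> cp e U kP P -> cp e U kQ Q ->
  exists v, [/\ v \in U, connected_set e (U :\ v) &
    #|ccomps e (pblock P v :\ v)| + #|ccomps e (pblock Q v :\ v)| <= 4].
Proof.
move=> cU U2 cP cQ.
have [x0 x0U] : exists x0, x0 \in U by apply/card_gt0P; apply: ltnW.
have [z0 z0U] : exists z0, z0 \in U :\ x0.
  by apply/card_gt0P; move: U2; rewrite (cardsD1 x0 U) x0U add1n ltnS.
pose cond := fun p : T * T => (p.1 \in U) && (p.2 \in U :\ p.1).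
pose meas := fun p : T * T => #|ccomp e (U :\ p.1) p.2|.
have c0 : cond (x0, z0) by rewrite /cond /= x0U z0U.
case: (@arg_minnP _ (x0, z0) cond meas c0) => [[x z]].
rewrite /cond /meas /= => /andP[xU zUx] pmin.
set W := ccomp e (U :\ x) z.
have WUx : W \subset U :\ x by exact: comp_sub.
have WU : W \subset U.
  by apply: subset_trans WUx _; apply/subsetP => t; rewrite in_setD1 => /andP[].
have xW : x \notin W by apply/negP => /(subsetP WUx); rewrite in_setD1 eqxx.
have clos : forall a b, a \in W -> b \in U -> b != x -> e a b -> b \in W.
  by move=> a b aW bU bx eab; apply: comp_clos aW _ eab; rewrite in_setD1 bx bU.
have zW : z \in W by exact: comp_self.
have NC : forall v, v \in W -> connected_set e (U :\ v).
  move=> v vW.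
  have vU : v \in U by exact: (subsetP WU).
  have xv : x != v by apply/eqP => xv; move: xW; rewrite xv vW.
  have xUv : x \in U :\ v by rewrite in_setD1 xv xU.
  have H : forall y, y \in U :\ v -> cr (U :\ v) x y.
    move=> y yUv; case: (boolP (cr (U :\ v) x y)) => // nxy; exfalso.
    set W' := ccomp e (U :\ v) y.
    have yW' : y \in W' by exact: comp_self.
    have xW' : x \notin W'.
      apply/negP => xW'; move: nxy; rewrite cr_sym //.
      by move: xW'; rewrite inE => /andP[_ ->].
    have vW' : v \notin W' by apply/negP => /(subsetP (comp_sub _ _ _)); rewrite in_setD1 eqxx.
    have yU : y \in U by move: yUv; rewrite in_setD1 => /andP[].
    have [a [b [aW' bW' aU bU eab]]] := boundary yW' vW' (conn_cr cU yU vU).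
    have bv : b = v.
      apply/eqP; apply/negPn/negP => bv; move: bW'.
      by rewrite (comp_clos aW' _ eab) // in_setD1 bv bU.
    subst b.
    have ax : a != x by apply/eqP => ax; move: xW'; rewrite -ax aW'.
    have aW : a \in W by apply: (clos v a vW aU ax); rewrite sym_e.
    have W'W : W' \subset W.
      rewrite /W -(comp_eq sym_e aW).
      apply: sub_comp => //.
        apply/subsetP => t tW'; rewrite in_setD1.
        have := subsetP (comp_sub _ _ _) t tW'; rewrite in_setD1 => /andP[_ ->].
        by rewrite andbT; apply/negP => /eqP tx; move: xW'; rewrite -tx tW'.
      move=> t tW'; rewrite /W' -(comp_eq sym_e aW'); apply: (comp_inner sym_e).
      by rewrite (comp_eq sym_e aW').
    have := pmin (v, y); rewrite /= vU yUv => /(_ isT).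
    rewrite -/W' => hle.
    have : #|W'| < #|W|.
      apply: proper_card; rewrite properE W'W /=.
      by apply/negP => /subsetP /(_ v vW); rewrite (negbTE vW').
    by rewrite ltnNge hle.
  split; first by apply/set0Pn; exists x.
  move=> y1 y2 y1U y2U; apply: connect_trans (H y2 y2U).
  by rewrite cr_sym //; apply: H.
have sP := side_count sym_e cP WU clos.
have sQ := side_count sym_e cQ WU clos.
case: (pickP [pred v | (v \in W) &&
   (#|ccomps e (pblock P v :\ v)| + #|ccomps e (pblock Q v :\ v)| <= 4)]) => [v /andP[vW hv]|none].
  by exists v; split => //; [exact: (subsetP WU) | exact: NC].
exfalso.
have : \sum_(v in W) 5 <= \sum_(v in W) (#|ccomps e (pblock P v :\ v)| + #|ccomps e (pblock Q v :\ v)|).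
  apply: leq_sum => v vW; move: (none v); rewrite /= vW /= => /negbT.
  by rewrite -ltnNge.
rewrite big_split /= sum_nat_const => h.
have h2 := leq_trans h (leq_add sP sQ).
have W0 : 0 < #|W| by rewrite card_gt0; apply/set0Pn; exists z.
by move: h2; rewrite -mulnDl [_ * #|W|]mulnC leq_pmul2l.
Qed.

End Good.


Section Main.
Variables (T : finType) (e : rel T).
Hypothesis sym_e : symmetric e.
Implicit Types (U S X Y A B C D W : {set T}) (x y z v w : T) (P Q R : {set {set T}}).

Lemma cp1 U P : cp e U 1 P -> P = [set U].
Proof.
move=> cP; have /cards1P[B PB] : #|P| == 1 by rewrite (cp_card cP).
have := cp_cover cP; rewrite PB => hc.
suff -> : B = U by [].
rewrite -hc; apply/setP => t; apply/idP/coverP => [tB|[B' /set1P-> //]].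
by exists B; rewrite ?inE.
Qed.

Lemma gen k : forall U P Q, connected_set e U -> cp e U k.+1 P -> cp e U k.+1 Q ->
  reach e U k.+1 P Q (4 * k).
Proof.
elim: k => [|k IH] U P Q cU cP cQ.
  by rewrite (cp1 cP) (cp1 cQ); exact: reach_refl.
have U2 : 1 < #|U|.
  have [A AP] : exists A, A \in P by apply/card_gt0P; rewrite (cp_card cP).
  have : 1 < #|P| by rewrite (cp_card cP).
  rewrite (cardsD1 A P) AP add1n ltnS card_gt0 => /set0Pn[B]; rewrite in_setD1 => /andP[nBA BP].
  have /set0Pn[a aA] := cp_ne cP AP.
  have /set0Pn[b bB] := cp_ne cP BP.
  have ab : a != b.
    apply/eqP => ab; move: nBA; rewrite (triv_eq (cp_triv cP) BP AP bB (_ : b \in A)) ?eqxx //.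
    by rewrite -ab.
  rewrite (cardsD1 a U) (subsetP (cp_sub cP AP) a aA) add1n ltnS card_gt0.
  by apply/set0Pn; exists b; rewrite in_setD1 eq_sym ab (subsetP (cp_sub cP BP) b bB).
have [v [vU cUv hv]] := good_vertex sym_e cU U2 cP cQ.
have hyp : forall R kk, cp e U kk R -> forall A, A \in R -> v \in A ->
    #|ccomps e (A :\ v)| <= #|ccomps e (pblock R v :\ v)|.
  by move=> R kk cR A AR vA; rewrite (def_pblock (cp_triv cR) AR vA).
have [P1 [cP1 vP1 rP]] := iso sym_e vU cUv cP (hyp P _ cP).
have [Q1 [cQ1 vQ1 rQ]] := iso sym_e vU cUv cQ (hyp Q _ cQ).
have cP1' := cp_restr cP1 vP1.
have cQ1' := cp_restr cQ1 vQ1.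
have r' := IH _ _ _ cUv cP1' cQ1'.
have rl := reach_lift vU r'.
rewrite !setD1K // in rl.
have := reach_cat (reach_cat rP rl) (reach_sym rQ).
apply: reach_mono.
apply: (@leq_trans (#|ccomps e (pblock P v :\ v)| + #|ccomps e (pblock Q v :\ v)| + 4 * k)).
  by rewrite addnAC.
by rewrite mulnS leq_add2r.
Qed.

End Main.


Lemma walk_eq (T : finType) (e : rel T) k P s :
  walkU e [set: T] k P s -> Rinf_walk e k P s.
Proof. by elim: s P => //= Q s IH P [h w]; split => //; apply: IH. Qed.

Lemma walk_conn (T : finType) (e : rel T) k P s :
  Rinf_walk e k P s -> Rinf_conn e k P (last P s).
Proof.
elim: s P => [|Q s IH] P /=; first by move=> _; apply: Rinf_refl.
by case=> h w; apply: Rinf_step h (IH Q w).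
Qed.

Unset Implicit Arguments.
Theorem mainTheorem3 (T : finType) (e : rel T) (k : nat) :
  symmetric e -> irreflexive e -> connected_graph e -> 1 <= k ->
  forall P1 P2 : {set {set T}},
    conn_partition e k P1 -> conn_partition e k P2 ->
    (exists s : seq {set {set T}},
        [/\ Rinf_walk e k P1 s, last P1 s = P2 & size s <= 6 * (k - 1)])
    /\ Rinf_conn e k P1 P2.
Proof.
move=> sym_e _ cG; case: k => // k _ P1 P2 c1 c2.
have [s [w l sz]] := gen sym_e cG c1 c2.
have w' := walk_eq w.
split.
  exists s; split => //; apply: leq_trans sz _.
  by rewrite subn1 /= leq_mul2r orbT.
by rewrite -l; apply: walk_conn.
Qed.
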